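(* Let $n\ge 2$ and let $S=\{s_1<\dots<s_{k_1}\}$ and $T=\{t_1<\dots<t_{k_2}\}$ be nonempty subsets of $\{1,\dots,n-1\}$ with $\max S+\min T\le n$ and $\min S+\max T\le n$. Let $D$ be the digraph of the Boolean Toeplitz matrix $T_n\langle S;T\rangle$, let $d=\gcd\{s+t : s\in S,\ t\in T\}$ and $d'=\gcd(d,s_1)$. Then (a) the matrix period of $D$ is $d/d'$; (b) the competition period of $D$ is $1$; (c) there is $M$ such that for every $m\ge M$, the $m$-step competition graph $C^m(D)$ is the disjoint union of the cliques $\{v\in[n] : v\equiv i \pmod d\}$, $1\le i\le d$ (i.e. the limit of $\{C^m(D)\}_{m\ge1}$ is this disjoint union of cliques).
   Context: Boolean arithmetic on $\{0,1\}$: $1+1=1$, usual multiplication. For nonempty $S,T\subseteq\{1,\dots,n-1\}$, $T_n\langle S;T\rangle$ is the $n\times n$ $(0,1)$-matrix whose $(i,j)$-entry is $1$ iff $j-i\in S$ or $i-j\in T$. Its digraph $D$ has vertex set $[n]=\{1,\dots,n\}$ and an arc $(i,j)$ iff the $(i,j)$-entry is $1$. The matrix period of $D$ (of its adjacency matrix $A$) is the smallest $p\ge1$ such that $A^m=A^{m+p}$ for all sufficiently large $m$ (Boolean powers). The $m$-step competition graph $C^m(D)$ is the graph on $[n]$ in which distinct $u,v$ are adjacent iff some vertex $w$ is reachable from both $u$ and $v$ by directed walks of length exactly $m$; equivalently the off-diagonal $(u,v)$-entry of $A^m(A^T)^m$ is $1$. The competition index $q$ and competition period $p$ of $A$: $q$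 is the smallest positive integer such that $A^{q+i}(A^T)^{q+i}=A^{q+r+i}(A^T)^{q+r+i}$ for some $r\ge1$ and all $i\ge0$, and $p$ is the smallest positive integer with $A^q(A^T)^q=A^{q+p}(A^T)^{q+p}$. *)

(* Defs.v *)
From mathcomp Require Import all_boot all_algebra.
Set Implicit Arguments. Unset Strict Implicit. Unset Printing Implicit Defensive.

(* Boolean (0,1)-matrices over 'I_n: vertex i : 'I_n represents vertex i+1 of [n]. *)
Definition bmul n (A B : 'M[bool]_n) : 'M[bool]_n :=
  \matrix_(i, j) [exists k, A i k && B k j].
Definition bid n : 'M[bool]_n := \matrix_(i, j) (i == j).
Definition bpow n (A : 'M[bool]_n) (m : nat) : 'M[bool]_n := iter m (bmul A) (bid n).

Definition toeplitz n (S T : {set 'I_n}) : 'M[bool]_n :=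
  \matrix_(i, j) ([exists s in S, (i + s == j :> nat)] ||
                  [exists t in T, (j + t == i :> nat)]).

Definition setmin n (S : {set 'I_n}) : nat := \big[minn/n]_(s in S) (s : nat).
Definition setmax n (S : {set 'I_n}) : nat := \max_(s in S) (s : nat).
Definition gcd_sums n (S T : {set 'I_n}) : nat :=
  \big[gcdn/0]_(s in S) \big[gcdn/0]_(t in T) (s + t : nat).

Definition eventually_periodic n (A : 'M[bool]_n) (p : nat) : Prop :=
  exists M, forall m, M <= m -> bpow A m = bpow A (m + p).
Definition matrix_period n (A : 'M[bool]_n) (p : nat) : Prop :=
  0 < p /\ eventually_periodic A p /\
  (forall p', 0 < p' -> eventually_periodic A p' -> p <= p').

Definition compmx n (A : 'M[bool]_n) (m : nat) : 'M[bool]_n :=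
  bmul (bpow A m) (bpow A^T m).

Definition comp_index_cond n (A : 'M[bool]_n) (q : nat) : Prop :=
  exists r, 0 < r /\ forall i, compmx A (q + i) = compmx A (q + r + i).
Definition competition_index n (A : 'M[bool]_n) (q : nat) : Prop :=
  0 < q /\ comp_index_cond A q /\
  (forall q', 0 < q' -> comp_index_cond A q' -> q <= q').
Definition competition_period n (A : 'M[bool]_n) (p : nat) : Prop :=
  exists q, competition_index A q /\
    0 < p /\ compmx A q = compmx A (q + p) /\
    (forall p', 0 < p' -> compmx A q = compmx A (q + p') -> p <= p').

Definition comp_adj n (A : 'M[bool]_n) (m : nat) (u v : 'I_n) : bool :=
  (u != v) && [exists w, bpow A m u w && bpow A m v w].

(* Main.v *)
Require Import Defs.
From mathcomp Require Import all_boot all_algebra.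
From mathcomp Require Import zify.
From Stdlib Require Import Classical.
Set Implicit Arguments. Unset Strict Implicit. Unset Printing Implicit Defensive.

Lemma bpow0E n (A : 'M[bool]_n) i j : bpow A 0 i j = (i == j).
Proof. by rewrite /bpow /= /bid mxE. Qed.

Lemma bpowSE n (A : 'M[bool]_n) m i j :
  bpow A m.+1 i j = [exists k, A i k && bpow A m k j].
Proof. by rewrite /bpow iterS /bmul mxE. Qed.

Lemma bpowDE n (A : 'M[bool]_n) m1 m2 i j :
  bpow A (m1 + m2) i j = [exists k, bpow A m1 i k && bpow A m2 k j].
Proof.
elim: m1 i j => [|m1 IH] i j.
  rewrite add0n; apply/idP/existsP => [h|[k /andP[]]].
    by exists i; rewrite bpow0E eqxx.
  by rewrite bpow0E => /eqP ->.
rewrite addSn bpowSE; apply/existsP/existsP => [[k /andP[Aik]]|[k]].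
  rewrite IH => /existsP[w /andP[h1 h2]]; exists w; rewrite h2 andbT bpowSE.
  by apply/existsP; exists k; rewrite Aik.
rewrite bpowSE => /andP[/existsP[w /andP[Aiw h1]] h2]; exists w.
by rewrite Aiw IH; apply/existsP; exists k; rewrite h1.
Qed.

Lemma bpow1E n (A : 'M[bool]_n) i j : bpow A 1 i j = A i j.
Proof.
rewrite bpowSE; apply/existsP/idP => [[k]|h]; first by rewrite bpow0E => /andP[h /eqP <-].
by exists j; rewrite h bpow0E eqxx.
Qed.

Lemma bpowTE n (A : 'M[bool]_n) m i j : bpow A^T m i j = bpow A m j i.
Proof.
elim: m i j => [|m IH] i j; first by rewrite !bpow0E eq_sym.
rewrite bpowSE -[in RHS]addn1 bpowDE; apply/existsP/existsP => [[k]|[k]].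
  by rewrite mxE IH => /andP[h1 h2]; exists k; rewrite h2 bpow1E h1.
by rewrite bpow1E => /andP[h1 h2]; exists k; rewrite mxE IH h1 h2.
Qed.

Lemma min_ex (P : nat -> Prop) : (exists q, P q) -> exists q, P q /\ forall q', P q' -> q <= q'.
Proof.
case=> q; elim/ltn_ind: q => q IH Pq.
case: (classic (exists q', q' < q /\ P q')) => [[q' [lt Pq']]|no].
  exact: IH lt Pq'.
exists q; split=> // q' Pq'; rewrite leqNgt; apply/negP => lt; apply: no; eauto.
Qed.

Lemma unif1 (P : nat -> nat -> Prop) B :
  (forall x, x < B -> exists M, forall m, M <= m -> P x m) ->
  exists M, forall x, x < B -> forall m, M <= m -> P x m.
Proof.
elim: B => [|B IH] h; first by exists 0.
case: IH => [x xB|M1 H1]; first by apply: h; apply: ltnW.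
case: (h B (ltnSn B)) => M2 H2; exists (maxn M1 M2) => x; rewrite ltnS leq_eqVlt.
case/orP => [/eqP ->|xB] m; rewrite geq_max => /andP[m1 m2]; first exact: H2.
exact: H1.
Qed.
Lemma bigmin_seq_le n (l : seq 'I_n) (s : 'I_n) :
  s \in l -> \big[minn/n]_(i <- l) (i : nat) <= s.
Proof.
elim: l => // a l IH; rewrite inE big_cons => /orP[/eqP <-|h]; first exact: geq_minl.
by rewrite geq_min IH ?orbT.
Qed.

Lemma setmin_le n (S : {set 'I_n}) (s : 'I_n) : s \in S -> setmin S <= s.
Proof.
move=> sS; rewrite /setmin -big_filter; apply: bigmin_seq_le; by rewrite mem_filter sS /= mem_index_enum.
Qed.

Lemma setmin_in n (S : {set 'I_n}) : S != set0 -> exists2 s : 'I_n, s \in S & setmin S = s.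
Proof.
case/set0Pn => s0 s0S.
pose P x := x = n \/ exists2 s : 'I_n, s \in S & x = s.
have : P (setmin S).
  apply: (big_ind P); first by left.
    by move=> x y hx hy; rewrite /minn; case: ifP.
  by move=> i iS; right; exists i.
case=> [h|//]; have := setmin_le s0S; by rewrite h leqNgt ltn_ord.
Qed.

Lemma setmax_ge n (S : {set 'I_n}) (s : 'I_n) : s \in S -> s <= setmax S.
Proof. by move=> sS; rewrite /setmax (leq_bigmax_cond s). Qed.

Lemma dvd_gs n (S T : {set 'I_n}) (s t : 'I_n) : s \in S -> t \in T -> gcd_sums S T %| s + t.
Proof. by move=> sS tT; apply: (biggcdn_inf s) => //; apply: (biggcdn_inf t). Qed.

Lemma gs_dvd n (S T : {set 'I_n}) m :
  (forall s t : 'I_n, s \in S -> t \in T -> m %| s + t) -> m %| gcd_sums S T.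
Proof. by move=> h; apply/dvdn_biggcdP => s sS; apply/dvdn_biggcdP => t tT; apply: h. Qed.

Lemma modD0 x y d : d %| y -> (x + y) %% d = x %% d.
Proof. by case/dvdnP => k ->; rewrite addnC modnMDl. Qed.

Lemma gcdnB a b : b <= a -> gcdn (a - b) b = gcdn a b.
Proof. by move=> h; rewrite gcdnC -gcdnDr subnK // gcdnC. Qed.

Section Main.
Variable n' : nat.
Local Notation n := n'.+1.
Variables S T : {set 'I_n}.
Hypotheses (S0 : S != set0) (T0 : T != set0).
Hypothesis Spos : forall s : 'I_n, s \in S -> 0 < s.
Hypothesis Tpos : forall t : 'I_n, t \in T -> 0 < t.
Hypothesis HmaxS : setmax S + setmin T <= n.
Hypothesis HmaxT : setmin S + setmax T <= n.
Local Notation A := (toeplitz S T).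
Local Notation s1 := (setmin S).
Local Notation t1 := (setmin T).
Local Notation d := (gcd_sums S T).
Local Notation d' := (gcdn (gcd_sums S T) (setmin S)).

Lemma s1_in : exists2 s : 'I_n, s \in S & s1 = s.
Proof. exact: setmin_in. Qed.
Lemma t1_in : exists2 t : 'I_n, t \in T & t1 = t.
Proof. exact: setmin_in. Qed.

Lemma s1_pos : 0 < s1.
Proof. by case: s1_in => s sS ->; apply: Spos. Qed.
Lemma t1_pos : 0 < t1.
Proof. by case: t1_in => s sS ->; apply: Tpos. Qed.

Lemma st1_le (s : 'I_n) : s \in S -> s + t1 <= n.
Proof. by move=> sS; apply: leq_trans HmaxS; rewrite leq_add2r setmax_ge. Qed.
Lemma s1t_le (t : 'I_n) : t \in T -> s1 + t <= n.
Proof. by move=> tT; apply: leq_trans HmaxT; rewrite leq_add2l setmax_ge. Qed.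

Lemma d_s1t1 : d %| s1 + t1.
Proof. by case: s1_in => s sS ->; case: t1_in => t tT ->; apply: dvd_gs. Qed.

Lemma d_pos : 0 < d.
Proof.
have := d_s1t1; case: (posnP d) => // ->; rewrite dvd0n addn_eq0 => /andP[/eqP h _].
by have := s1_pos; rewrite h.
Qed.

Lemma d_le : d <= n.
Proof.
apply: leq_trans (dvdn_leq _ d_s1t1) _; first by rewrite addn_gt0 s1_pos.
case: t1_in => t tT ->; exact: s1t_le.
Qed.

Lemma d'_pos : 0 < d'.
Proof. by rewrite gcdn_gt0 d_pos. Qed.

Lemma arc_mod i j : A i j -> j %% d = (i + s1) %% d.
Proof.
rewrite mxE => /orP[/existsP[s /andP[sS /eqP <-]] | /existsP[t /andP[tT /eqP <-]]].
  apply/eqP; rewrite -(eqn_modDr t1) -!addnA !modD0 //; first exact: d_s1t1.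
  by case: t1_in => t tT ->; apply: dvd_gs.
rewrite -addnA modD0 //; case: s1_in => s sS ->; rewrite addnC; exact: dvd_gs.
Qed.

Lemma bpow_mod m i j : bpow A m i j -> j %% d = (i + m * s1) %% d.
Proof.
elim: m i j => [|m IH] i j; first by rewrite bpow0E => /eqP ->; rewrite mul0n addn0.
rewrite bpowSE => /existsP[k /andP[Aik hk]].
by rewrite (IH _ _ hk) -modnDml (arc_mod Aik) modnDml mulSn addnA.
Qed.

Definition rch m x y := [&& x < n, y < n & bpow A m (inord x) (inord y)].

Lemma rch_mod m x y : rch m x y -> y %% d = (x + m * s1) %% d.
Proof.
case/and3P => hx hy /bpow_mod; by rewrite !inordK.
Qed.

Lemma rch0 x : x < n -> rch 0 x x.
Proof. by move=> hx; rewrite /rch hx bpow0E eqxx. Qed.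

Lemma rch_add m1 m2 x y z : rch m1 x y -> rch m2 y z -> rch (m1 + m2) x z.
Proof.
case/and3P => hx hy h1 /and3P[_ hz h2]; rewrite /rch hx hz bpowDE.
by apply/existsP; exists (inord y); rewrite h1.
Qed.

Lemma rch_up (s : 'I_n) x y : s \in S -> x + s = y -> y < n -> rch 1 x y.
Proof.
move=> sS hxy hy; have hx : x < n by apply: leq_ltn_trans hy; rewrite -hxy leq_addr.
rewrite /rch hx hy bpow1E mxE; apply/orP; left; apply/existsP; exists s.
by rewrite sS /= (inordK hx) (inordK hy) hxy.
Qed.

Lemma rch_dn (t : 'I_n) x y : t \in T -> x = y + t -> x < n -> rch 1 x y.
Proof.
move=> tT hxy hx; have hy : y < n by apply: leq_ltn_trans hx; rewrite hxy leq_addr.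
rewrite /rch hx hy bpow1E mxE; apply/orP; right; apply/existsP; exists t.
by rewrite tT /= (inordK hx) (inordK hy) hxy.
Qed.

Lemma greedy (s t : 'I_n) : s \in S -> t \in T -> s + t <= n ->
  forall k i j x y, i + j = k -> x < n -> y < n -> x + i * s = y + j * t -> rch k x y.
Proof.
move=> sS tT hst; elim=> [|k IH] i j x y hk hx hy e.
  have [hi hj] : i = 0 /\ j = 0 by lia.
  by move: e; rewrite hi hj !mul0n !addn0 => ->; apply: rch0.
have down : 0 < j -> t <= x -> rch k.+1 x y.
  move=> j0 tx; rewrite -add1n; apply: (@rch_add 1 k x (x - t)).
    by apply: (rch_dn tT) => //; lia.
  apply: (IH i j.-1) => //; [lia|lia|].
  move: e; case: j j0 {hk} => // j _; rewrite mulSn; lia.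
have up : 0 < i -> x + s < n -> rch k.+1 x y.
  move=> i0 xs; rewrite -add1n; apply: (@rch_add 1 k x (x + s)).
    exact: (rch_up sS).
  apply: (IH i.-1 j) => //; [lia|].
  move: e; case: i i0 {hk} => // i _; rewrite mulSn; lia.
case: (posnP i) => [i0|ip].
  apply: down; [lia|]; move: e; rewrite i0 mul0n addn0 => ->.
  have j0 : 0 < j by lia.
  by case: j j0 {hk} => // j _; rewrite mulSn; lia.
case: (posnP j) => [j0|jp].
  apply: up => //; move: e hy; rewrite j0 mul0n addn0 => <-.
  by case: i ip {hk} => // i _; rewrite mulSn; lia.
case: (ltnP (x + s) n) => xs; first exact: up.
by apply: down => //; lia.
Qed.

Definition Rc x y := exists m, rch m x y.
Definition Up c := forall x y, x + c = y -> y < n -> Rc x y.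
Definition Dn c := forall x y, x = y + c -> x < n -> Rc x y.

Lemma Rc_trans x y z : Rc x y -> Rc y z -> Rc x z.
Proof. by case=> m1 h1 [m2 h2]; exists (m1 + m2); apply: rch_add h1 h2. Qed.

Lemma Rc_refl x : x < n -> Rc x x.
Proof. by move=> hx; exists 0; apply: rch0. Qed.

Lemma Rc_lt x y : Rc x y -> x < n /\ y < n.
Proof. by case=> m /and3P[]. Qed.

Lemma euclid : forall N a b, a + b < N -> 0 < a -> 0 < b -> a + b <= n ->
  Up a -> Dn b -> Up (gcdn a b) /\ Dn (gcdn a b).
Proof.
elim=> [|N IH] a b //= hN a0 b0 hab Ua Db.
case: (ltngtP a b) => [ltab | ltba | eqab].
- have Db' : Dn (b - a).
    move=> x y hxy hx; case: (ltnP (x + a) n) => h.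
      apply: (@Rc_trans _ (x + a)); first exact: Ua.
      by apply: Db => //; lia.
    apply: (@Rc_trans _ (x - b)); first by apply: Db => //; lia.
    by apply: Ua => //; lia.
  have := IH a (b - a); rewrite -[gcdn a (b - a)]gcdnC gcdnB ?(ltnW ltab) // gcdnC.
  by apply => //; lia.
- have Ua' : Up (a - b).
    move=> x y hxy hy; case: (ltnP (x + a) n) => h.
      apply: (@Rc_trans _ (x + a)); first exact: Ua.
      by apply: Db => //; lia.
    apply: (@Rc_trans _ (x - b)); first by apply: Db => //; lia.
    by apply: Ua => //; lia.
  have := IH (a - b) b; rewrite gcdnB ?(ltnW ltba) //.
  by apply => //; lia.
- by subst b; rewrite gcdnn.
Qed.

Lemma Up_mult c : Up c -> forall k x y, x + k * c = y -> y < n -> Rc x y.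
Proof.
move=> Uc; elim=> [|k IH] x y e hy.
  by move: e; rewrite mul0n addn0 => ->; apply: Rc_refl.
apply: (@Rc_trans _ (x + c)); first by apply: Uc => //; move: e; rewrite mulSn; lia.
by apply: (IH _ _ _ hy); move: e; rewrite mulSn; lia.
Qed.

Lemma Dn_mult c : Dn c -> forall k x y, x = y + k * c -> x < n -> Rc x y.
Proof.
move=> Dc; elim=> [|k IH] x y e hx.
  by move: e hx; rewrite mul0n addn0 => ->; apply: Rc_refl.
apply: (@Rc_trans _ (x - c)); first by apply: Dc => //; move: e; rewrite mulSn; lia.
by apply: (IH _ _ _); move: e; rewrite mulSn; lia.
Qed.

Lemma C_mod c x y : Up c -> Dn c -> 0 < c -> x < n -> y < n -> x %% c = y %% c -> Rc x y.
Proof.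
move=> Uc Dc c0 hx hy e; case: (leqP x y) => hxy.
  have : c %| y - x by rewrite -eqn_mod_dvd // e.
  move/divnK => e2; apply: (@Up_mult c Uc ((y - x) %/ c) x y) => //; lia.
have : c %| x - y by rewrite -eqn_mod_dvd ?e // ltnW.
move/divnK => e2; apply: (@Dn_mult c Dc ((x - y) %/ c) x y) => //; lia.
Qed.

Lemma Up_S (s : 'I_n) : s \in S -> Up s.
Proof. by move=> sS x y e hy; exists 1; apply: rch_up sS e hy. Qed.
Lemma Dn_T (t : 'I_n) : t \in T -> Dn t.
Proof. by move=> tT x y e hx; exists 1; apply: rch_dn tT e hx. Qed.

Lemma conn_desc : forall N c, c < N -> 0 < c -> c %| s1 -> c %| t1 -> Up c -> Dn c ->
  exists c', [/\ 0 < c', c' %| d', Up c' & Dn c'].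
Proof.
elim=> [|N IH] c //= hN c0 cs1 ct1 Uc Dc.
case: (boolP ([forall s in S, c %| s] && [forall t in T, c %| t])).
  case/andP => /forall_inP hS /forall_inP hT; exists c; split => //.
  rewrite dvdn_gcd cs1 andbT; apply: gs_dvd => s t sS tT.
  by apply: dvdn_add; [apply: hS | apply: hT].
case: s1_in => s1o s1oS es1; case: t1_in => t1o t1oT et1.
have st : s1 + t1 <= n by rewrite et1; apply: s1t_le.
rewrite negb_and => /orP[/forall_inPn[s sS ncs] | /forall_inPn[t tT nct]].
- have Dt1 : Dn t1 by rewrite et1; apply: Dn_T.
  have [Uh Dh] := euclid (leqnn _) (Spos sS) t1_pos (st1_le sS) (Up_S sS) Dt1.
  have h0 : 0 < gcdn s t1 by rewrite gcdn_gt0 Spos.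
  have cle : c + gcdn s t1 <= n.
    apply: leq_trans st; apply: leq_add; first exact: dvdn_leq s1_pos cs1.
    exact: dvdn_leq t1_pos (dvdn_gcdr _ _).
  have [Uc' Dc'] := euclid (leqnn _) c0 h0 cle Uc Dh.
  have c'0 : 0 < gcdn c (gcdn s t1) by rewrite gcdn_gt0 c0.
  have c'le : gcdn c (gcdn s t1) < c.
    rewrite ltn_neqAle dvdn_leq ?dvdn_gcdl // andbT; apply/eqP => e.
    move: ncs; rewrite -e; move/negP; apply.
    exact: dvdn_trans (dvdn_gcdr _ _) (dvdn_gcdl _ _).
  apply: (IH (gcdn c (gcdn s t1))) => //.
  + exact: leq_trans c'le _.
  + exact: dvdn_trans (dvdn_gcdl _ _) cs1.
  + exact: dvdn_trans (dvdn_gcdr _ _) (dvdn_gcdr _ _).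
- have Us1 : Up s1 by rewrite es1; apply: Up_S.
  have [Uh Dh] := euclid (leqnn _) s1_pos (Tpos tT) (s1t_le tT) Us1 (Dn_T tT).
  have h0 : 0 < gcdn s1 t by rewrite gcdn_gt0 s1_pos.
  have cle : gcdn s1 t + c <= n.
    apply: leq_trans st; apply: leq_add; last exact: dvdn_leq t1_pos ct1.
    exact: dvdn_leq s1_pos (dvdn_gcdl _ _).
  have [Uc' Dc'] := euclid (leqnn _) h0 c0 cle Uh Dc.
  have c'0 : 0 < gcdn (gcdn s1 t) c by rewrite gcdn_gt0 h0.
  have c'le : gcdn (gcdn s1 t) c < c.
    rewrite ltn_neqAle dvdn_leq ?dvdn_gcdr // andbT; apply/eqP => e.
    move: nct; rewrite -e; move/negP; apply.
    exact: dvdn_trans (dvdn_gcdl _ _) (dvdn_gcdr _ _).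
  apply: (IH (gcdn (gcdn s1 t) c)) => //.
  + exact: leq_trans c'le _.
  + exact: dvdn_trans (dvdn_gcdl _ _) (dvdn_gcdl _ _).
  + exact: dvdn_trans (dvdn_gcdr _ _) ct1.
Qed.

Lemma conn x y : x < n -> y < n -> x %% d' = y %% d' -> Rc x y.
Proof.
move=> hx hy e.
case: s1_in => s1o s1oS es1; case: t1_in => t1o t1oT et1.
have Us1 : Up s1 by rewrite es1; apply: Up_S.
have Dt1 : Dn t1 by rewrite et1; apply: Dn_T.
have st : s1 + t1 <= n by rewrite et1; apply: s1t_le.
have [U0 D0] := euclid (leqnn _) s1_pos t1_pos st Us1 Dt1.
have g0 : 0 < gcdn s1 t1 by rewrite gcdn_gt0 s1_pos.
have [c [c0 cd Uc Dc]] := conn_desc (leqnn _) g0 (dvdn_gcdl s1 t1) (dvdn_gcdr s1 t1) U0 D0.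
apply: (C_mod Uc Dc c0 hx hy).
by rewrite -(modn_dvdm x cd) -(modn_dvdm y cd) e.
Qed.


Definition Q L := forall x, x < n -> rch L x x.
Lemma Q0 : Q 0.
Proof. by move=> x hx; apply: rch0. Qed.
Lemma Q_add a b : Q a -> Q b -> Q (a + b).
Proof. by move=> ha hb x hx; apply: rch_add (ha x hx) (hb x hx). Qed.
Lemma Q_mult a : Q a -> forall j x, Q x -> Q (j * a + x).
Proof.
move=> Qa; elim=> [|j IH] x Qx; first by rewrite mul0n add0n.
by rewrite mulSn -addnA; apply: Q_add => //; apply: IH.
Qed.
Definition SG g := exists K, forall k, K <= k -> Q (k * g).
Lemma Q_SG a : Q a -> SG a.
Proof. by move=> Qa; exists 0 => k _; rewrite -[k * a]addn0; apply: Q_mult Q0. Qed.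

Definition Lpair (s t : nat) := s %/ gcdn s t + t %/ gcdn s t.

Lemma Q_pair (s t : 'I_n) : s \in S -> t \in T -> s + t <= n -> Q (Lpair s t).
Proof.
move=> sS tT hst x hx.
apply: (greedy sS tT hst (i := t %/ gcdn s t) (j := s %/ gcdn s t)) => //.
  by rewrite addnC.
have e1 := divnK (dvdn_gcdl s t); have e2 := divnK (dvdn_gcdr s t).
move: e1 e2; set h := gcdn s t; set a := s %/ h; set b := t %/ h => e1 e2.
by rewrite -{1}e1 -{1}e2 mulnCA.
Qed.

Lemma sg_step g a : SG g -> 0 < g -> Q a -> 0 < a -> SG (gcdn g a).
Proof.
move=> [K HK] g0 Qa a0.
case: (egcdnP a g0) => km kn E _.
have h0 : 0 < gcdn g a by rewrite gcdn_gt0 g0.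
have [g' eg] : exists g', g = g' * gcdn g a by exists (g %/ gcdn g a); rewrite divnK // dvdn_gcdl.
have [a' ea] : exists a', a = a' * gcdn g a by exists (a %/ gcdn g a); rewrite divnK // dvdn_gcdr.
move: E eg ea; set h := gcdn g a => E eg ea.
have E' : km * g' = kn * a' + 1.
  apply/eqP; rewrite -(eqn_pmul2r h0) mulnDl mul1n -!mulnA -eg -ea E //.
have a'0 : 0 < a' by move: a0; rewrite ea muln_gt0 => /andP[].
exists (a' * (a' * kn + K * g' + 1)) => N hN.
have hq : a' * kn + K * g' + 1 <= N %/ a' by rewrite leq_divRL // mulnC.
have hr : N %% a' < a' by rewrite ltn_pmod.
have eN := divn_eq N a'.
move: hq hr eN; set q := N %/ a'; set r := N %% a' => hq hr eN.
have hrkn : r * kn <= a' * kn by rewrite leq_mul2r (ltnW hr) orbT.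
have [al eq] : exists al, q = al + r * kn + K * g' by exists (q - (r * kn + K * g')); lia.
have E2 : r * h * (km * g') = r * h * (kn * a' + 1) by rewrite E'.
have eqN : N * h = al * a + (r * km + K * a') * g.
  rewrite eN eq ea eg; lia.
rewrite eqN; apply: (Q_mult Qa al); apply: HK.
by apply: leq_trans (leq_addl _ _); rewrite leq_pmulr.
Qed.

Lemma Lp g : (forall s : 'I_n, s \in S -> g %| Lpair s t1) ->
  (forall t : 'I_n, t \in T -> g %| Lpair s1 t) -> g %| d %/ d'.
Proof.
move=> hS hT.
case: s1_in => s1o s1oS es1; case: t1_in => t1o t1oT et1.
have dd : d' %| d := dvdn_gcdl _ _.
have ds1 : d' %| s1 := dvdn_gcdr _ _.
have dt1 : d' %| t1.
  rewrite -(dvdn_addr t1 ds1); exact: dvdn_trans dd d_s1t1.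
have dS : forall s : 'I_n, s \in S -> d' %| s.
  move=> s sS; rewrite -(dvdn_addl s dt1); apply: dvdn_trans dd _.
  by rewrite et1; apply: dvd_gs.
have dT : forall t : 'I_n, t \in T -> d' %| t.
  move=> t tT; rewrite -(dvdn_addr t ds1); apply: dvdn_trans dd _.
  by rewrite es1; apply: dvd_gs.
have pair : forall s t : nat, d' %| s -> d' %| t -> g %| Lpair s t -> g * d' %| s + t.
  move=> s t ds dt hg.
  have dh : d' %| gcdn s t by rewrite dvdn_gcd ds dt.
  have -> : s + t = Lpair s t * (gcdn s t %/ d') * d'.
    by rewrite -mulnA divnK // /Lpair mulnDl !divnK ?dvdn_gcdl ?dvdn_gcdr.
  by apply: dvdn_mul (dvdnn _); apply: dvdn_mulr.
have A3 : g * d' %| s1 + t1 by apply: pair => //; rewrite es1; apply: hS.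
have all : g * d' %| d.
  apply: gs_dvd => s t sS tT.
  have A1 : g * d' %| s + t1 by apply: pair; [apply: dS|exact: dt1|apply: hS].
  have A2 : g * d' %| s1 + t by apply: pair; [exact: ds1|apply: dT|apply: hT].
  have : g * d' %| (s + t) + (s1 + t1).
    by rewrite (_ : _ + _ = (s + t1) + (s1 + t)); [apply: dvdn_add | lia].
  by rewrite (dvdn_addl _ A3).
by rewrite -(dvdn_pmul2r d'_pos) divnK.
Qed.

Lemma Lpair_pos (s t : nat) : 0 < s -> 0 < Lpair s t.
Proof.
move=> s0; rewrite /Lpair addn_gt0 divn_gt0 ?gcdn_gt0 ?s0 //.
by rewrite dvdn_leq ?dvdn_gcdl.
Qed.

Lemma sg_desc : forall N g, g < N -> 0 < g -> SG g ->
  exists g', [/\ 0 < g', g' %| d %/ d' & SG g'].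
Proof.
elim=> [|N IH] g //= hN g0 Sg.
case: s1_in => s1o s1oS es1; case: t1_in => t1o t1oT et1.
case: (boolP ([forall s in S, g %| Lpair s t1] && [forall t in T, g %| Lpair s1 t])).
  case/andP => /forall_inP hS /forall_inP hT; exists g; split => //.
  exact: Lp.
rewrite negb_and => /orP[/forall_inPn[s sS ncs] | /forall_inPn[t tT nct]].
- have QL : Q (Lpair s t1) by rewrite et1; apply: Q_pair => //; rewrite -et1 st1_le.
  have L0 : 0 < Lpair s t1 by apply: Lpair_pos; apply: Spos.
  have S' := sg_step Sg g0 QL L0.
  have c'0 : 0 < gcdn g (Lpair s t1) by rewrite gcdn_gt0 g0.
  have c'le : gcdn g (Lpair s t1) < g.
    rewrite ltn_neqAle dvdn_leq ?dvdn_gcdl // andbT; apply/eqP => e.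
    by move: ncs; rewrite -e dvdn_gcdr.
  by apply: (IH (gcdn g (Lpair s t1))) => //; apply: leq_trans c'le _.
- have QL : Q (Lpair s1 t) by rewrite es1; apply: Q_pair => //; rewrite -es1 s1t_le.
  have L0 : 0 < Lpair s1 t by apply: Lpair_pos; apply: s1_pos.
  have S' := sg_step Sg g0 QL L0.
  have c'0 : 0 < gcdn g (Lpair s1 t) by rewrite gcdn_gt0 g0.
  have c'le : gcdn g (Lpair s1 t) < g.
    rewrite ltn_neqAle dvdn_leq ?dvdn_gcdl // andbT; apply/eqP => e.
    by move: nct; rewrite -e dvdn_gcdr.
  by apply: (IH (gcdn g (Lpair s1 t))) => //; apply: leq_trans c'le _.
Qed.

Lemma sg_final : exists g, [/\ 0 < g, g %| d %/ d' & SG g].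
Proof.
case: s1_in => s1o s1oS es1; case: t1_in => t1o t1oT et1.
have QL : Q (Lpair s1 t1) by rewrite es1 et1; apply: Q_pair => //; rewrite -es1 s1t_le.
exact: (sg_desc (leqnn _) (Lpair_pos _ s1_pos) (Q_SG QL)).
Qed.

Lemma hard_xy x y : x < n -> y < n -> exists M, forall m, M <= m ->
  y %% d = (x + m * s1) %% d -> rch m x y.
Proof.
move=> hx hy.
have [g [g0 gp [K HK]]] := sg_final.
case: (boolP (x %% d' == y %% d')) => [/eqP e | ne].
  case: (conn hx hy e) => l hl; exists (l + K * g) => m hm hc.
  have hl' := rch_mod hl.
  have lm : l <= m by apply: leq_trans hm; apply: leq_addr.
  have h1 : d %| (m - l) * s1.
    rewrite mulnBl -eqn_mod_dvd; last by rewrite leq_mul2r lm orbT.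
    by rewrite -(eqn_modDl x) -hc -hl'.
  have h2 : d %| (m - l) * d' by rewrite muln_gcdr dvdn_gcd dvdn_mull ?dvdnn.
  have h3 : d %/ d' %| m - l by rewrite -(dvdn_pmul2r d'_pos) divnK ?dvdn_gcdl.
  have h4 : g %| m - l := dvdn_trans gp h3.
  have hK : K <= (m - l) %/ g by rewrite leq_divRL // leq_subRL.
  have em : m = l + (m - l) %/ g * g by rewrite divnK // subnKC.
  rewrite em.
  by apply: rch_add hl (HK _ hK y hy).
exists 0 => m _ hc; exfalso; move/negP: ne; apply; apply/eqP.
rewrite -(modn_dvdm y (dvdn_gcdl d s1)) hc modn_dvdm ?dvdn_gcdl //.
by rewrite modD0 // dvdn_mull // dvdn_gcdr.
Qed.

Lemma hard : exists M, forall m, M <= m -> forall x y, x < n -> y < n ->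
  y %% d = (x + m * s1) %% d -> rch m x y.
Proof.
have h1 : forall x, x < n -> exists M, forall m, M <= m -> forall y, y < n ->
    y %% d = (x + m * s1) %% d -> rch m x y.
  move=> x hx.
  have st : forall y, y < n -> exists M, forall m, M <= m ->
      (fun y m => y < n -> y %% d = (x + m * s1) %% d -> rch m x y) y m.
    by move=> y hy; have [M HM] := hard_xy hx hy; exists M => m hm _; apply: HM.
  have [M HM] := unif1 st.
  by exists M => m hm y hy; apply: HM.
have [M HM] := unif1 (P := fun x m => forall y, y < n -> y %% d = (x + m * s1) %% d -> rch m x y) h1.
by exists M => m hm x y hx; apply: HM.
Qed.

Lemma charac : exists M, forall m, M <= m -> forall u v : 'I_n,
  bpow A m u v = (v %% d == (u + m * s1) %% d).
Proof.
have [M HM] := hard; exists M => m hm u v.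
apply/idP/eqP => [/bpow_mod //|h].
by have := HM m hm u v (ltn_ord u) (ltn_ord v) h; rewrite /rch !inord_val => /and3P[].
Qed.

Lemma dvd_ps d0 s : d0 %| d0 %/ gcdn d0 s * s.
Proof.
rewrite -[X in _ * X](divnK (dvdn_gcdr d0 s)) mulnCA divnK ?dvdn_gcdl //.
exact: dvdn_mull.
Qed.

Lemma main_sec :
  let A := toeplitz S T in
  let d := gcd_sums S T in
  let d' := gcdn d (setmin S) in
  [/\ matrix_period A (d %/ d'),
      competition_period A 1 &
      exists M, forall m, M <= m -> forall u v : 'I_n,
        comp_adj A m u v = (u != v) && (u %% d == v %% d)].
Proof.
move=> /=.
have [M HM] := charac.
have p0 : 0 < d %/ d' by rewrite divn_gt0 ?d'_pos // dvdn_leq ?d_pos ?dvdn_gcdl.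
have ps1 : d %| d %/ d' * s1 := dvd_ps _ _.
have ex_w : forall m, M <= m -> forall u v : 'I_n,
    [exists w, bpow A m u w && bpow A m v w] = (u %% d == v %% d).
  move=> m hm u v; apply/existsP/idP => [[w]|h].
    rewrite !HM // => /andP[/eqP h1 /eqP h2].
    by rewrite -(eqn_modDr (m * s1)) -h1 -h2.
  have wl : (u + m * s1) %% d < n by apply: leq_trans (ltn_pmod _ d_pos) d_le.
  exists (inord ((u + m * s1) %% d)); rewrite !HM // inordK // modn_mod eqxx /=.
  by apply/eqP; apply/eqP; rewrite eqn_modDr.
have CC : forall m, M <= m -> compmx A m = (\matrix_(u, v) ((u %% d)%N == (v %% d)%N) : 'M[bool]_n)%R.
  move=> m hm; apply/matrixP => u v; rewrite /compmx /bmul !mxE -(ex_w m hm).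
  apply/existsP/existsP => [[k]|[k]]; first by rewrite bpowTE => h; exists k.
  by move=> h; exists k; rewrite bpowTE.
split.
- split => //; split.
    exists M => m hm; apply/matrixP => u v.
    rewrite (HM m hm) (HM (m + _)) ?(leq_trans hm (leq_addr _ _)) //.
    by rewrite mulnDl addnA (modD0 _ ps1).
  move=> p' p'0 [M' HM'].
  pose m := (M + M') * d.
  have hm : M <= m by rewrite /m (leq_trans (leq_addr M' M)) // leq_pmulr ?d_pos.
  have hm' : M' <= m by rewrite /m (leq_trans (leq_addl M M')) // leq_pmulr ?d_pos.
  have md : d %| m * s1 by rewrite /m mulnAC dvdn_mull.
  have := HM' m hm' => /matrixP /(_ ord0 ord0).
  rewrite (HM m hm) (HM (m + p')) ?(leq_trans hm (leq_addr _ _)) //= add0n mod0n.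
  rewrite (eqP md) eqxx mulnDl => /esym/eqP.
  rewrite add0n => /esym/eqP h0; have : d %| m * s1 + p' * s1 by []. rewrite (dvdn_addr _ md) => h1.
  have h2 : d %| p' * d' by rewrite muln_gcdr dvdn_gcd dvdn_mull ?dvdnn.
  apply: dvdn_leq p'0 _.
  by rewrite -(dvdn_pmul2r d'_pos) divnK ?dvdn_gcdl.
- pose P q := 0 < q /\ comp_index_cond A q.
  have [q [[q0 hq] qmin]] : exists q, P q /\ forall q', P q' -> q <= q'.
    apply: min_ex; exists M.+1; split => //; exists 1; split => // i.
    have L1 : forall j, M <= M.+1 + j by move=> j; rewrite addSn ltnW // ltnS leq_addr.
    by rewrite !CC // ?L1 // -addnA L1.
  exists q; split; first by split; [|split] => // q' q'0 hq'; apply: qmin.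
  split => //; split; last by [].
  case: hq => r [r0 hr].
  have iter : forall k i, compmx A (q + i) = compmx A (q + k * r + i).
    elim=> [|k IH] i; first by rewrite mul0n addn0.
    rewrite IH -addnA hr; congr compmx; by rewrite mulSn !addnA.
  have e0 := iter M 0; have e1 := iter M 1; rewrite addn0 in e0.
  have L : M <= q + M * r by rewrite (leq_trans _ (leq_addl _ _)) // leq_pmulr.
  by rewrite e0 e1 !CC ?addn0 // (leq_trans L (leq_addr _ _)).
- by exists M => m hm u v; rewrite /comp_adj ex_w.
Qed.

End Main.

Unset Implicit Arguments.

Theorem theoremA (n : nat) (S T : {set 'I_n}) :
  2 <= n ->
  S != set0 -> T != set0 ->
  (forall s : 'I_n, s \in S -> 0 < s) ->
  (forall t : 'I_n, t \in T -> 0 < t) ->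
  setmax S + setmin T <= n ->
  setmin S + setmax T <= n ->
  let A := toeplitz S T in
  let d := gcd_sums S T in
  let d' := gcdn d (setmin S) in
  [/\ matrix_period A (d %/ d'),
      competition_period A 1 &
      exists M, forall m, M <= m -> forall u v : 'I_n,
        comp_adj A m u v = (u != v) && (u %% d == v %% d)].
Proof.
case: n S T => [|n'] S T h2; first by [].
move=> S0 T0 Sp Tp H1 H2.
exact: main_sec.
Qed.
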